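(* There are infinitely many positive integers $N$ for which there are no antipalindromic numbers $A,B$ (in base $2$) with $N=A/B$.
   Context: A positive integer $n$ is antipalindromic if its binary representation $w=w_1\cdots w_L$ (most significant digit first, no leading zeros) has even length $L$ and satisfies $w_i+w_{L+1-i}=1$ for all $i$. *)

(* Defs.v *)
From mathcomp Require Import all_boot.
Set Implicit Arguments. Unset Strict Implicit. Unset Printing Implicit Defensive.

(* Binary digits of n, most significant digit first, no leading zeros
   (empty for n = 0). *)
Fixpoint bin_lsb_aux (fuel n : nat) : seq nat :=
  match fuel with
  | 0 => [::]
  | f.+1 => if n == 0 then [::] else (n %% 2) :: bin_lsb_aux f (n %/ 2)
  end.

Definition binary (n : nat) : seq nat := rev (bin_lsb_aux n n).

(* w = w_1 ... w_L (1-indexed in the paper; 0-indexed here):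
   L even and w_i + w_{L+1-i} = 1 for all i. *)
Definition antipalindromic (n : nat) : Prop :=
  let w := binary n in
  let L := size w in
  0 < n /\ ~~ odd L /\
  forall i, i < L -> nth 0 w i + nth 0 w (L.-1 - i) = 1.

(* Main.v *)
Require Import Defs.
From mathcomp Require Import all_boot.
From mathcomp Require Import zify.

Lemma fuel_indep : forall f g n, n <= f -> n <= g ->
  bin_lsb_aux f n = bin_lsb_aux g n.
Proof.
elim=> [|f IH] [|g] n /= hf hg //.
- by have -> : n = 0 by lia.
- by have -> : n = 0 by lia.
- case: eqP => // hn; congr (_ :: _); apply: IH.
  + have := ltn_Pdiv (isT : 1 < 2) (_ : 0 < n); lia.
  + have := ltn_Pdiv (isT : 1 < 2) (_ : 0 < n); lia.
Qed.

Lemma size_double n : 0 < n -> size (binary (2 * n)) = (size (binary n)).+1.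
Proof.
move=> hn; rewrite /binary !size_rev.
have h2 : 2 * n = (2 * n - 1).+1 by lia.
rewrite {1}h2 /=.
have -> : (2 * n == 0) = false by apply/eqP; lia.
have -> : (2 * n) %/ 2 = n by rewrite mulKn.
by rewrite /= (@fuel_indep _ n) //; lia.
Qed.

Lemma size_pow m n : 0 < n -> size (binary (2 ^ m * n)) = size (binary n) + m.
Proof.
move=> hn; elim: m => [|m IH]; first by rewrite expn0 mul1n addn0.
rewrite expnS -mulnA size_double ?IH ?addnS //.
by rewrite muln_gt0 expn_gt0.
Qed.

Theorem theorem17 :
  forall M : nat, exists N : nat, M < N /\
    ~ (exists A B : nat, antipalindromic A /\ antipalindromic B /\ A = N * B).
Proof.
move=> M; exists (2 ^ (2 * M).+1); split.
  have := ltn_expl (2 * M).+1 (isT : 1 < 2); lia.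
case=> A [B [[hA [oA _]] [[hB [oB _]] e]]].
move: oA; rewrite e size_pow // oddD oddS mul2n odd_double /=.
by rewrite (negbTE oB).
Qed.
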